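(* Let $H$ be the graph consisting of two vertex-disjoint triangles $v_1v_2v_3$ and $w_1w_2w_3$ together with the edge $v_3w_1$. Let $n\ge 7$ and let $G$ be a graph with $n$ vertices obtained from $H$ by attaching $n-6$ pendant edges (new leaves) to vertices of $H$, such that both $v_3$ and $w_1$ are incident with at least one pendant edge. Then $\operatorname{avm}(G)>\operatorname{avm}(T_n^1(3,3))$.
   Context: $\operatorname{avm}(G)$ is the average of $|M|$ over all maximal matchings $M$ of $G$ (a matching is maximal if not properly contained in another matching). $T_n^1(3,3)$ is the graph obtained from $H$ by attaching $n-6$ pendant edges (new leaves) to $v_3$. *)

(* Defs.v *)
From mathcomp Require Import all_boot all_order all_algebra.
Set Implicit Arguments. Unset Strict Implicit. Unset Printing Implicit Defensive.
Import Order.TTheory GRing.Theory Num.Theory.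

Section Matchings.
Variables (T : finType) (e : rel T).

Definition is_edge (s : {set T}) : bool :=
  [exists x, exists y, [&& s == [set x; y], x != y & e x y]].

Definition matching (M : {set {set T}}) : bool :=
  [forall s in M, is_edge s] &&
  [forall s in M, forall t in M, (s != t) ==> [disjoint s & t]].

Definition maximal_matching (M : {set {set T}}) : bool :=
  matching M && ~~ [exists N, matching N && (M \proper N)].

Definition avm : rat :=
  ((\sum_(M : {set {set T}} | maximal_matching M) #|M|)%:R
     / #|[set M : {set {set T}} | maximal_matching M]|%:R)%R.
End Matchings.

(* Vertices of H: 0 = v1, 1 = v2, 2 = v3, 3 = w1, 4 = w2, 5 = w3. *)
Definition Hedge (a b : nat) : bool :=
  [|| [&& a < 3, b < 3 & a != b],
      [&& 3 <= a, a < 6, 3 <= b, b < 6 & a != b]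
    | ((a == 2) && (b == 3)) || ((a == 3) && (b == 2))].

Definition v3 : 'I_6 := @Ordinal 6 2 isT.
Definition w1 : 'I_6 := @Ordinal 6 3 isT.

(* Graph on 'I_n: vertices 0..5 form H; each vertex i >= 6 is a leaf
   adjacent only to the H-vertex att i. *)
Definition Gedge (n : nat) (att : 'I_n -> 'I_6) : rel 'I_n :=
  fun x y =>
    [|| [&& (x < 6)%N, (y < 6)%N & Hedge x y],
        [&& (6 <= x)%N, (y < 6)%N & (att x : nat) == y]
      | [&& (6 <= y)%N, (x < 6)%N & (att y : nat) == x]].

Definition Tn1_33 (n : nat) : rel 'I_n := @Gedge n (fun _ : 'I_n => v3).
Arguments Tn1_33 n : clear implicits.

(* Main.v *)
Require Import Defs.
From mathcomp Require Import all_boot all_order all_algebra.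
From mathcomp Require Import ring zify.
From Stdlib Require Import FunctionalExtensionality.
Set Implicit Arguments. Unset Strict Implicit. Unset Printing Implicit Defensive.
Import Order.TTheory GRing.Theory Num.Theory.

Lemma disjP (T : finType) (A B : {set T}) :
  reflect (forall x, x \in A -> x \in B -> False) [disjoint A & B].
Proof.
apply: (iffP idP) => [d x xA xB|H]; first by rewrite (disjointFr d xA) in xB.
rewrite -setI_eq0; apply/eqP/setP => z; rewrite !inE.
by apply/negP => /andP[/H h /h].
Qed.

Section Gen.
Variables (T : finType) (e : rel T).

Lemma is_edgeP (s : {set T}) :
  reflect (exists x y, [/\ s = [set x; y], x != y & e x y]) (is_edge e s).
Proof.
apply: (iffP existsP) => [[x /existsP[y /and3P[/eqP-> ? ?]]]|[x [y [-> ? ?]]]].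
  by exists x, y.
by exists x; apply/existsP; exists y; rewrite eqxx /=; apply/andP.
Qed.

Lemma matchingP (M : {set {set T}}) :
  reflect ((forall s, s \in M -> is_edge e s) /\
           (forall s t x, s \in M -> t \in M -> x \in s -> x \in t -> s = t))
          (matching e M).
Proof.
apply: (iffP andP) => [[/forallP H1 /forallP H2]|[H1 H2]]; split.
- by move=> s sM; have := H1 s; rewrite sM.
- move=> s t x sM tM xs xt; apply/eqP; apply: contraT => st.
  have := H2 s; rewrite sM /= => /forallP/(_ t); rewrite tM /= st /=.
  by move/disjP/(_ x xs xt).
- by apply/forallP => s; apply/implyP; apply: H1.
- apply/forallP => s; apply/implyP => sM; apply/forallP => t; apply/implyP => tM.
  apply/implyP => st; apply/disjP => x xs xt.
  by rewrite (H2 s t x sM tM xs xt) eqxx in st.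
Qed.

Lemma maximalP (M : {set {set T}}) :
  maximal_matching e M =
  matching e M && [forall x, forall y, (e x y && (x != y)) ==>
     [exists s in M, (x \in s) || (y \in s)]].
Proof.
rewrite /maximal_matching; case mM: (matching e M) => //=.
move/matchingP: mM => [H1 H2].
apply/idP/idP.
- move=> nN; apply/forallP => x; apply/forallP => y; apply/implyP => /andP[exy xy].
  apply: contraNT nN => nc; apply/existsP; exists ([set x; y] |: M).
  have nc' : forall s, s \in M -> (x \notin s) && (y \notin s).
    move=> s sM; apply: contraNT nc; rewrite negb_and !negbK => h.
    by apply/existsP; exists s; rewrite sM.
  apply/andP; split.
    apply/matchingP; split.
      move=> s; rewrite in_setU1 => /orP[/eqP->|]; last exact: H1.
      by apply/is_edgeP; exists x, y.
    move=> s t z; rewrite !in_setU1 => /orP[/eqP->|sM] /orP[/eqP->|tM] // zs zt.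
    + have := nc' t tM; move: zs; rewrite !inE => /orP[]/eqP<-; by rewrite zt ?andbF.
    + have := nc' s sM; move: zt; rewrite !inE => /orP[]/eqP<-; by rewrite zs ?andbF.
    + exact: H2 zs zt.
  apply/properP; split; first exact: subsetUr.
  exists [set x; y]; first by rewrite setU11.
  apply/negP => xyM; have := nc' _ xyM; by rewrite !inE eqxx.
- move=> /forallP cov; apply/negP => /existsP[N /andP[/matchingP[N1 N2] /properP[MN [s sN sM]]]].
  have /is_edgeP[x [y [sxy xy exy]]] := N1 s sN.
  have /existsP[t /andP[tM xyt]] := implyP (forallP (cov x) y) (introT andP (conj exy xy)).
  have tN : t \in N := subsetP MN t tM.
  case/orP: xyt => zt.
    have := N2 s t x sN tN; rewrite sxy !inE eqxx => /(_ isT zt) st.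
    by move: sM; rewrite sxy st tM.
  have := N2 s t y sN tN; rewrite sxy !inE eqxx orbT => /(_ isT zt) st.
  by move: sM; rewrite sxy st tM.
Qed.
End Gen.


Definition e1n (j : nat) : nat := nth 0 [:: 0; 1; 0; 3; 4; 3; 2] j.
Definition e2n (j : nat) : nat := nth 0 [:: 1; 2; 2; 4; 5; 5; 3] j.
Definition idxn (u w : nat) : nat :=
  index (minn u w, maxn u w) [:: (0,1); (1,2); (0,2); (3,4); (4,5); (3,5); (2,3)].

Lemma e_lt6 j : j < 7 -> (e1n j < 6) && (e2n j < 6) && (e1n j != e2n j).
Proof. by move: j; do 7! case=> //. Qed.

Lemma Hedge_lt u w : Hedge u w -> (u < 6) && (w < 6).
Proof.
rewrite /Hedge => /or3P[/and3P[h1 h2 _]|/and5P[_ h1 _ h2 _]|/orP[]/andP[/eqP-> /eqP->]] //.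
  by rewrite (ltn_trans h1) ?(ltn_trans h2).
by rewrite h1 h2.
Qed.

Lemma Hedge_idx_all : all (fun u => all (fun w => Hedge u w ==>
   [&& idxn u w < 7 & ((e1n (idxn u w) == u) && (e2n (idxn u w) == w))
        || ((e1n (idxn u w) == w) && (e2n (idxn u w) == u))]) (iota 0 6)) (iota 0 6).
Proof. by []. Qed.

Lemma Hedge_idx u w : Hedge u w -> exists2 j, j < 7 &
   ((e1n j == u) && (e2n j == w)) || ((e1n j == w) && (e2n j == u)).
Proof.
move=> h; have /andP[u6 w6] := Hedge_lt h.
have := allP Hedge_idx_all u; rewrite mem_iota u6 => /(_ isT) /allP /(_ w).
rewrite mem_iota w6 => /(_ isT); rewrite h /= => /andP[lt7 H].
by exists (idxn u w).
Qed.

Lemma Hedge_e j : j < 7 -> Hedge (e1n j) (e2n j).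
Proof. by move: j; do 7! case=> //. Qed.

Definition B7 := (bool * bool * bool * bool * bool * bool * bool)%type.
Definition bits (p : B7) : seq bool :=
  let: (b0, b1, b2, b3, b4, b5, b6) := p in [:: b0; b1; b2; b3; b4; b5; b6].
Definition hasb (p : B7) (j : nat) : bool := nth false (bits p) j.
Definition mkB (f : nat -> bool) : B7 := (f 0, f 1, f 2, f 3, f 4, f 5, f 6).
Lemma hasb_mkB f j : j < 7 -> hasb (mkB f) j = f j.
Proof. by move: j; do 7! case=> //. Qed.
Lemma mkB_hasb p : mkB (hasb p) = p.
Proof. by case: p => [[[[[[? ?] ?] ?] ?] ?] ?]. Qed.
Lemma hasb_ge7 p j : 7 <= j -> hasb p j = false.
Proof. by case: p => [[[[[[? ?] ?] ?] ?] ?] ?] h; rewrite /hasb nth_default. Qed.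

Definition covb (p : B7) (v : nat) : bool :=
  has (fun j => hasb p j && ((v == e1n j) || (v == e2n j))) (iota 0 7).
Definition disjn j k :=
  [&& e1n j != e1n k, e1n j != e2n k, e2n j != e1n k & e2n j != e2n k].
Definition hmb (p : B7) : bool :=
  all (fun j => all (fun k => (j != k) ==> (hasb p j && hasb p k) ==> disjn j k)
    (iota 0 7)) (iota 0 7).
Definition validb (z : nat -> bool) (p : B7) : bool :=
  hmb p && all (fun j => ~~ [&& ~~ covb p (e1n j), ~~ covb p (e2n j),
                               z (e1n j) & z (e2n j)]) (iota 0 7).

Lemma covbP p v : reflect (exists2 j, hasb p j & (v == e1n j) || (v == e2n j)) (covb p v).
Proof.
apply: (iffP hasP) => [[j _ /andP[h1 h2]]|[j h1 h2]]; first by exists j.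
exists j; last by rewrite h1.
by rewrite mem_iota /=; apply: contraTT h1; rewrite -leqNgt => /hasb_ge7->.
Qed.

Lemma hmbP p : reflect (forall j k, hasb p j -> hasb p k -> j != k -> disjn j k) (hmb p).
Proof.
apply: (iffP allP) => [H j k hj hk jk|H j _].
  have j7 : j < 7 by apply: contraTT hj; rewrite -leqNgt => /hasb_ge7->.
  have k7 : k < 7 by apply: contraTT hk; rewrite -leqNgt => /hasb_ge7->.
  have := H j; rewrite mem_iota j7 => /(_ isT) /allP /(_ k).
  by rewrite mem_iota k7 => /(_ isT); rewrite jk hj hk.
apply/allP => k _; apply/implyP => jk; apply/implyP => /andP[hj hk]; exact: H.
Qed.


Section Graph.
Variables (n' : nat) (hn : 6 <= n') (att : 'I_n'.+1 -> 'I_6).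
Local Notation n := n'.+1.
Local Notation ge := (Gedge att).

Definition hv (k : nat) : 'I_n := inord k.
Lemma hvK k : k < 6 -> hv k = k :> nat.
Proof. by move=> k6; rewrite /hv inordK // ltnS (leq_trans (ltnW k6) hn). Qed.
Lemma hv_val (x : 'I_n) : x < 6 -> hv x = x.
Proof. by move=> x6; apply: val_inj; rewrite /= hvK. Qed.
Lemma hv_inj k l : k < 6 -> l < 6 -> (hv k == hv l) = (k == l).
Proof.
move=> k6 l6; apply/eqP/eqP => [h|->] //.
by rewrite -(hvK k6) -(hvK l6) h.
Qed.

Lemma att_lt6 (x : 'I_n) : att x < 6. Proof. exact: ltn_ord. Qed.
Lemma ge6F k : k < 6 -> (6 <= k) = false.
Proof. by move=> h; apply/negbTE; rewrite -ltnNge. Qed.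

Lemma ge_hv k l : k < 6 -> l < 6 -> ge (hv k) (hv l) = Hedge k l.
Proof.
move=> k6 l6; rewrite /Gedge !hvK // k6 l6 /=.
by rewrite (ge6F k6) (ge6F l6) /= !orbF.
Qed.

Lemma ge_leaf (l : 'I_n) : 6 <= l -> ge l (hv (att l)) && ge (hv (att l)) l.
Proof.
move=> l6; have a6 := att_lt6 l.
apply/andP; split; rewrite /Gedge hvK //; apply/or3P.
  by constructor 2; rewrite l6 a6 eqxx.
by constructor 3; rewrite l6 a6 eqxx.
Qed.

Definition hedge (j : nat) : {set 'I_n} := [set hv (e1n j); hv (e2n j)].
Definition lf (l : 'I_n) : {set 'I_n} := [set hv (att l); l].

Lemma edge_shape s : is_edge ge s ->
  (exists2 j, j < 7 & s = hedge j) \/ (exists2 l : 'I_n, 6 <= l & s = lf l).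
Proof.
case/is_edgeP => x [y [-> xy]]; rewrite /Gedge.
case/or3P => [/and3P[x6 y6 /Hedge_idx[j j7 /orP[]/andP[/eqP e1 /eqP e2]]]|/and3P[x6 y6 /eqP axy]|/and3P[y6 x6 /eqP ayx]].
- left; exists j => //; by rewrite /hedge e1 e2 !hv_val.
- left; exists j => //; by rewrite /hedge e1 e2 !hv_val // setUC.
- right; exists x => //; by rewrite /lf axy hv_val // setUC.
- right; exists y => //; by rewrite /lf ayx hv_val.
Qed.

Lemma hedge_lt6 j z : j < 7 -> z \in hedge j -> z < 6.
Proof.
move/e_lt6 => /andP[/andP[h1 h2] _]; rewrite !inE => /orP[]/eqP->; by rewrite hvK.
Qed.

Lemma hv_in_hedge j k : j < 7 -> k < 6 ->
  (hv k \in hedge j) = (k == e1n j) || (k == e2n j).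
Proof.
move/e_lt6 => /andP[/andP[h1 h2] _] k6; by rewrite !inE !hv_inj.
Qed.

Lemma leaf_in_lf (l z : 'I_n) : 6 <= z -> (z \in lf l) = (z == l).
Proof.
move=> z6; rewrite !inE; case: eqP => // /(congr1 val); rewrite /= hvK ?att_lt6 //.
by move=> e; move: z6; rewrite e ge6F ?att_lt6.
Qed.

Lemma hv_in_lf (l : 'I_n) k : k < 6 -> 6 <= l -> (hv k \in lf l) = (k == att l).
Proof.
move=> k6 l6; rewrite !inE hv_inj ?att_lt6 //; case: eqP => //= _.
apply/negP => /eqP e; move: l6; by rewrite -e hvK // ge6F.
Qed.

Lemma hedge_edge j : j < 7 -> is_edge ge (hedge j).
Proof.
move=> j7; have /andP[/andP[h1 h2] h3] := e_lt6 j7.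
apply/is_edgeP; exists (hv (e1n j)), (hv (e2n j)); split => //.
  by rewrite hv_inj.
by rewrite ge_hv // Hedge_e.
Qed.

Lemma lf_edge (l : 'I_n) : 6 <= l -> is_edge ge (lf l).
Proof.
move=> l6; apply/is_edgeP; exists (hv (att l)), l; split => //.
  by apply/negP => /eqP/(congr1 val); rewrite /= hvK ?att_lt6 // => e; move: l6; rewrite -e ge6F ?att_lt6.
by case/andP: (ge_leaf l6).
Qed.


Lemma hedge_inj_all : all (fun j => all (fun k =>
   ((e1n j == e1n k) || (e1n j == e2n k)) && ((e2n j == e1n k) || (e2n j == e2n k))
   ==> (j == k)) (iota 0 7)) (iota 0 7).
Proof. by []. Qed.

Lemma hedge_inj j k : j < 7 -> k < 7 -> hedge j = hedge k -> j = k.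
Proof.
move=> j7 k7 E.
have /andP[/andP[a1 a2] _] := e_lt6 j7.
have h1 : hv (e1n j) \in hedge k by rewrite -E !inE eqxx.
have h2 : hv (e2n j) \in hedge k by rewrite -E !inE eqxx orbT.
rewrite hv_in_hedge // in h1; rewrite hv_in_hedge // in h2.
have := allP hedge_inj_all j; rewrite mem_iota j7 => /(_ isT) /allP /(_ k).
by rewrite mem_iota k7 => /(_ isT); rewrite h1 h2 => /eqP.
Qed.

Lemma lf_inj (l l' : 'I_n) : 6 <= l -> lf l = lf l' -> l = l'.
Proof.
move=> l6 E; have : l \in lf l' by rewrite -E !inE eqxx orbT.
by rewrite leaf_in_lf // => /eqP.
Qed.

Lemma hedge_neq_lf j (l : 'I_n) : j < 7 -> 6 <= l -> hedge j != lf l.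
Proof.
move=> j7 l6; apply/negP => /eqP E.
have : l \in hedge j by rewrite E !inE eqxx orbT.
by move/(hedge_lt6 j7); rewrite ltnNge l6.
Qed.

Definition a (k : nat) : nat := #|[set x : 'I_n | (6 <= x) && (att x == k :> nat)]|.
Definition za (k : nat) : bool := a k == 0.

Lemma a_gt0 (l : 'I_n) : 6 <= l -> za (att l) = false.
Proof.
move=> l6; rewrite /za /a; apply/negbTE; rewrite -lt0n card_gt0.
by apply/set0Pn; exists l; rewrite inE l6 eqxx.
Qed.

Definition Fset (p : B7) (v : 'I_6) : pred (option 'I_n) :=
  if covb p v || za v then pred1 None
  else [pred o : option 'I_n | if o is Some x then (6 <= x) && (att x == v) else false].
Definition Tgt (q : B7 * {ffun 'I_6 -> option 'I_n}) : bool :=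
  validb za q.1 && (q.2 \in family (Fset q.1)).
Definition build (q : B7 * {ffun 'I_6 -> option 'I_n}) : {set {set 'I_n}} :=
  [set hedge j | j : 'I_7 & hasb q.1 j] :|:
  [set lf l | l : 'I_n & (6 <= l) && (q.2 (att l) == Some l)].
Definition phiM (M : {set {set 'I_n}}) : {ffun 'I_6 -> option 'I_n} :=
  [ffun v : 'I_6 => [pick x : 'I_n | (6 <= x) && ([set hv v; x] \in M)]].
Definition enc (M : {set {set 'I_n}}) := (mkB (fun j => hedge j \in M), phiM M).

Lemma inM_leaf M (v : 'I_6) (x : 'I_n) : matching ge M ->
  6 <= x -> [set hv v; x] \in M -> att x = v.
Proof.
move=> /matchingP[M1 _] x6 sM.
case: (edge_shape (M1 _ sM)) => [[j j7 E]|[l l6 E]].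
  have : x \in hedge j by rewrite -E !inE eqxx orbT.
  by move/(hedge_lt6 j7); rewrite ltnNge x6.
have : x \in lf l by rewrite -E !inE eqxx orbT.
rewrite leaf_in_lf // => /eqP xl; subst l.
have : hv v \in lf x by rewrite -E !inE eqxx.
by rewrite hv_in_lf // => /eqP e; apply: val_inj.
Qed.

Lemma E1 M : matching ge M -> build (enc M) = M.
Proof.
move=> mM; have /matchingP[M1 M2] := mM.
apply/setP => s; apply/idP/idP.
- rewrite inE => /orP[/imsetP[j jS ->]|/imsetP[l lS ->]].
    by move: jS; rewrite inE /= hasb_mkB ?ltn_ord.
  move: lS; rewrite inE => /andP[l6]; rewrite /phiM ffunE.
  by case: pickP => [x /andP[x6 xM]|_] // /eqP[xl]; subst x.
- move=> sM; rewrite inE; case: (edge_shape (M1 _ sM)) => [[j j7 E]|[l l6 E]].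
    apply/orP; left; apply/imsetP; exists (Ordinal j7) => //.
    by rewrite inE /= hasb_mkB // -E.
  apply/orP; right; apply/imsetP; exists l => //.
  rewrite inE l6 /= /phiM ffunE; case: pickP => [x /andP[x6 xM]|H].
    have ee : [set hv (att l); x] = s.
      by apply: (M2 _ _ (hv (att l)) xM sM); rewrite ?E !inE eqxx.
    have : x \in s by rewrite -ee !inE eqxx orbT.
    by rewrite E leaf_in_lf // => /eqP->.
  by move: (H l); rewrite l6 /=; change [set hv (att l); l] with (lf l); rewrite -E sM.
Qed.


Lemma lf_neq (l : 'I_n) : 6 <= l -> l != hv (att l).
Proof.
move=> l6; apply/negP => /eqP/(congr1 val); rewrite /= hvK ?att_lt6 // => e.
by move: l6; rewrite e ge6F ?att_lt6.
Qed.

Lemma E2 M : maximal_matching ge M -> Tgt (enc M).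
Proof.
rewrite maximalP => /andP[mM /forallP cv].
have /matchingP[M1 M2] := mM.
set p := (enc M).1.
have hp : forall j, hasb p j -> j < 7 /\ hedge j \in M.
  move=> j hj; have j7 : j < 7 by apply: contraTT hj; rewrite -leqNgt => /hasb_ge7->.
  by split => //; rewrite /p /= hasb_mkB // in hj.
have cov1 : forall u, u < 6 -> covb p u -> exists2 j, j < 7 & hedge j \in M /\ hv u \in hedge j.
  move=> u u6 /covbP[j /hp[j7 jM] uj]; exists j => //; split=> //; by rewrite hv_in_hedge.
have cov2 : forall u j, u < 6 -> j < 7 -> hedge j \in M -> hv u \in hedge j -> covb p u.
  move=> u j u6 j7 jM uj; apply/covbP; exists j; first by rewrite /p /= hasb_mkB.
  by rewrite -hv_in_hedge.
apply/andP; split.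
- apply/andP; split.
  + apply/hmbP => j k /hp[j7 jM] /hp[k7 kM] jk.
    have nsh : forall u, u < 6 -> ((u == e1n j) || (u == e2n j)) ->
                 ((u == e1n k) || (u == e2n k)) -> False.
      move=> u u6 uj uk; rewrite -hv_in_hedge // in uj; rewrite -hv_in_hedge // in uk.
      have := M2 _ _ _ jM kM uj uk => /(hedge_inj j7 k7) ejk.
      by rewrite ejk eqxx in jk.
    have /andP[/andP[j1 j2] _] := e_lt6 j7.
    rewrite /disjn; apply/and4P; split; apply/negP => /eqP e.
    * by apply: (nsh (e1n j)) => //; rewrite ?e eqxx ?orbT.
    * by apply: (nsh (e1n j)) => //; rewrite ?e eqxx ?orbT.
    * by apply: (nsh (e2n j)) => //; rewrite ?e eqxx ?orbT.
    * by apply: (nsh (e2n j)) => //; rewrite ?e eqxx ?orbT.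
  + apply/allP => j; rewrite mem_iota add0n /= => j7.
    apply/negP => /and4P[c1 c2 z1 z2].
    have /andP[/andP[j1 j2] j12] := e_lt6 j7.
    move: (cv (hv (e1n j))) => /forallP/(_ (hv (e2n j))).
    rewrite ge_hv // Hedge_e // hv_inj // j12 /= => /existsP[s /andP[sM hs]].
    case: (edge_shape (M1 _ sM)) => [[k k7 E]|[l l6 E]]; subst s.
    * case/orP: hs => hs.
        by have := cov2 _ _ j1 k7 sM hs; rewrite (negbTE c1).
      by have := cov2 _ _ j2 k7 sM hs; rewrite (negbTE c2).
    * case/orP: hs; rewrite hv_in_lf // => /eqP e.
        by rewrite e a_gt0 in z1.
      by rewrite e a_gt0 in z2.
- apply/familyP => v; rewrite /Fset /= ffunE.
  have v6 : v < 6 := ltn_ord v.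
  case: pickP => [x /andP[x6 xM]|none].
  + have ax := inM_leaf mM x6 xM.
    case: ifP => [/orP[c|z]|_].
    * exfalso; have [j j7 [jM vj]] := cov1 _ v6 c.
      have vx : hv v \in [set hv v; x] by rewrite !inE eqxx.
      have ee := M2 _ _ _ xM jM vx vj.
      have : x \in hedge j by rewrite -ee !inE eqxx orbT.
      by move/(hedge_lt6 j7); rewrite ltnNge x6.
    * by rewrite -ax a_gt0 in z.
    * by rewrite inE /= x6 ax eqxx.
  + case: ifP => [_|/norP[nc nz]]; first by rewrite inE.
    exfalso; rewrite /za /a -lt0n card_gt0 in nz.
    case/set0Pn: nz => l; rewrite inE => /andP[l6 /eqP alv].
    have alv' : att l = v by apply: val_inj.
    have lM : forall l' : 'I_n, 6 <= l' -> att l' = v -> lf l' \in M -> False.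
      move=> l' l'6 al' l'M; have := none l'; rewrite l'6 /=.
      have -> : [set hv v; l'] = lf l' by rewrite /lf al'.
      by rewrite l'M.
    move: (cv l) => /forallP/(_ (hv (att l))).
    have /andP[g1 _] := ge_leaf l6; rewrite g1 lf_neq //= => /existsP[s /andP[sM hs]].
    case: (edge_shape (M1 _ sM)) => [[k k7 E]|[l' l'6 E]]; subst s.
    * case/orP: hs => hs; first by move: (hedge_lt6 k7 hs); rewrite ltnNge l6.
      by have := cov2 _ _ (att_lt6 l) k7 sM hs; rewrite alv' (negbTE nc).
    * case/orP: hs.
        by rewrite leaf_in_lf // => /eqP ll'; subst l'; apply: (lM l).
      rewrite hv_in_lf ?att_lt6 // => /eqP e.
      by apply: (lM l') => //; rewrite -alv'; apply: val_inj; rewrite /= e.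
Qed.


Section Tg.
Variables (p : B7) (phi : {ffun 'I_6 -> option 'I_n}).
Hypothesis (hm : hmb p) (vl : all (fun j => ~~ [&& ~~ covb p (e1n j), ~~ covb p (e2n j),
                               za (e1n j) & za (e2n j)]) (iota 0 7))
           (fam : forall v, phi v \in Fset p v).

Lemma F1 (v : 'I_6) : covb p v || za v -> phi v = None.
Proof. by move=> c; have := fam v; rewrite /Fset c inE => /eqP. Qed.

Lemma F2 (v : 'I_6) : ~~ (covb p v || za v) -> exists2 l : 'I_n, phi v = Some l & (6 <= l) && (att l == v).
Proof.
move=> c; have := fam v; rewrite /Fset (negbTE c) inE.
by case: (phi v) => // l h; exists l.
Qed.

Lemma F3 (v : 'I_6) (l : 'I_n) : phi v = Some l -> (6 <= l) && (att l == v).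
Proof.
move=> e; case c: (covb p v || za v); first by rewrite F1 // in e.
by case: (F2 (negbT c)) => l' ; rewrite e => -[->].
Qed.

Lemma hasb_lt p' j : hasb p' j -> j < 7.
Proof. by move=> hj; apply: contraTT hj; rewrite -leqNgt => /hasb_ge7->. Qed.

Lemma coverH u : u < 6 -> covb p u || ~~ za u ->
  exists2 s, s \in build (p, phi) & hv u \in s.
Proof.
move=> u6 cz; case c: (covb p u).
  case/covbP: c => j hj uj; exists (hedge j); last by rewrite hv_in_hedge // (hasb_lt hj).
  by rewrite inE; apply/orP; left; apply/imsetP; exists (Ordinal (hasb_lt hj)); rewrite ?inE.
rewrite c /= in cz.
have [|l e /andP[l6 /eqP al]] := @F2 (Ordinal u6); first by rewrite /= c (negbTE cz).
exists (lf l); last by rewrite hv_in_lf // al.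
rewrite inE; apply/orP; right; apply/imsetP; exists l => //.
by rewrite inE l6 /= al e.
Qed.

Lemma E3 : maximal_matching ge (build (p, phi)).
Proof.
rewrite maximalP; apply/andP; split.
- apply/matchingP; split.
    move=> s; rewrite inE => /orP[/imsetP[j _ ->]|/imsetP[l]]; first exact: hedge_edge (ltn_ord j).
    by rewrite inE => /andP[l6 _] ->; apply: lf_edge.
  move=> s t z; rewrite !inE => /orP[/imsetP[j jS ->]|/imsetP[l lS ->]] /orP[/imsetP[k kS ->]|/imsetP[l' l'S ->]] zs zt.
  + case: (eqVneq j k) => [->//|jk]; exfalso.
    move: jS kS; rewrite !inE /= => hj hk.
    have z6 := hedge_lt6 (ltn_ord j) zs.
    rewrite -(hv_val z6) hv_in_hedge // in zs; rewrite -(hv_val z6) hv_in_hedge // in zt.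
    have := hmbP _ hm j k hj hk jk; rewrite /disjn => /and4P[d1 d2 d3 d4].
    case/orP: zs => /eqP ez; case/orP: zt => /eqP ez'.
    * by rewrite -ez -ez' eqxx in d1.
    * by rewrite -ez -ez' eqxx in d2.
    * by rewrite -ez -ez' eqxx in d3.
    * by rewrite -ez -ez' eqxx in d4.
  + exfalso; move: jS l'S; rewrite !inE /= => hj /andP[l6 /eqP e].
    have z6 := hedge_lt6 (ltn_ord j) zs.
    rewrite -(hv_val z6) hv_in_hedge // in zs; rewrite -(hv_val z6) hv_in_lf // in zt.
    have c : covb p (att l') by apply/covbP; exists j => //; rewrite -(eqP zt).
    by rewrite F1 ?c // in e.
  + exfalso; move: kS lS; rewrite !inE /= => hk /andP[l6 /eqP e].
    have z6 := hedge_lt6 (ltn_ord k) zt.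
    rewrite -(hv_val z6) hv_in_hedge // in zt; rewrite -(hv_val z6) hv_in_lf // in zs.
    have c : covb p (att l) by apply/covbP; exists k => //; rewrite -(eqP zs).
    by rewrite F1 ?c // in e.
  + move: lS l'S; rewrite !inE => /andP[l6 /eqP e] /andP[l'6 /eqP e'].
    case: (leqP 6 z) => z6.
      by rewrite leaf_in_lf // in zs; rewrite leaf_in_lf // in zt; rewrite -(eqP zs) -(eqP zt).
    rewrite -(hv_val z6) hv_in_lf // in zs; rewrite -(hv_val z6) hv_in_lf // in zt.
    have aa : att l = att l' by apply: val_inj; rewrite /= -(eqP zs) -(eqP zt).
    by move: e'; rewrite -aa e => -[->].
- apply/forallP => x; apply/forallP => y; apply/implyP => /andP[exy xy].
  have hsuff : forall z, z \in [set x; y] -> (exists2 s, s \in build (p, phi) & z \in s) ->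
     [exists s in build (p, phi), (x \in s) || (y \in s)].
    move=> z /set2P[]-> [s sB zs]; apply/existsP; exists s;
      by rewrite sB zs ?orbT.
  have : is_edge ge [set x; y] by apply/is_edgeP; exists x, y.
  move/edge_shape => [[j j7 E]|[l l6 E]].
    have /andP[/andP[j1 j2] _] := e_lt6 j7.
    have := allP vl j; rewrite mem_iota add0n j7 => /(_ isT).
    rewrite !negb_and !negbK => /or4P[c|c|z|z].
    * by apply: (hsuff (hv (e1n j))); [rewrite E !inE eqxx | apply: coverH; rewrite ?c].
    * by apply: (hsuff (hv (e2n j))); [rewrite E !inE eqxx orbT | apply: coverH; rewrite ?c].
    * by apply: (hsuff (hv (e1n j))); [rewrite E !inE eqxx | apply: coverH; rewrite ?z ?orbT].
    * by apply: (hsuff (hv (e2n j))); [rewrite E !inE eqxx orbT | apply: coverH; rewrite ?z ?orbT].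
  apply: (hsuff (hv (att l))); first by rewrite E !inE eqxx.
  by apply: coverH; rewrite ?att_lt6 // a_gt0 // orbT.
Qed.


Lemma mkB_ext (f g : nat -> bool) : (forall j, j < 7 -> f j = g j) -> mkB f = mkB g.
Proof. by move=> H; rewrite /mkB !H. Qed.

Lemma E4 : enc (build (p, phi)) = (p, phi).
Proof.
rewrite /enc; congr pair.
  rewrite -[in RHS](mkB_hasb p); apply: mkB_ext => j j7; apply/idP/idP.
    rewrite inE => /orP[/imsetP[k kS /(hedge_inj j7 (ltn_ord k)) E]|/imsetP[l lS E]].
      by move: kS; rewrite inE /= -E.
    by move: lS; rewrite inE => /andP[l6 _]; move: (hedge_neq_lf j7 l6); rewrite E eqxx.
  move=> hj; rewrite inE; apply/orP; left; apply/imsetP; exists (Ordinal j7) => //.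
  by rewrite inE.
apply/ffunP => v; rewrite ffunE; case: pickP => [x /andP[x6 xB]|none].
  move: xB; rewrite inE => /orP[/imsetP[k _ E]|/imsetP[l lS E]].
    have : x \in hedge k by rewrite -E !inE eqxx orbT.
    by move/(hedge_lt6 (ltn_ord k)); rewrite ltnNge x6.
  move: lS; rewrite inE => /andP[l6 /eqP e].
  have : x \in lf l by rewrite -E !inE eqxx orbT.
  rewrite leaf_in_lf // => /eqP xl; subst x.
  have : hv v \in lf l by rewrite -E !inE eqxx.
  rewrite hv_in_lf // => /eqP vl'.
  by rewrite -e; congr (phi _); apply: val_inj.
case e: (phi v) => [l|] //.
have /andP[l6 /eqP al] := F3 e.
have := none l; rewrite l6 /=.
have -> : [set hv v; l] = lf l by rewrite /lf al.
move=> /negP[]; rewrite inE; apply/orP; right; apply/imsetP; exists l => //.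
by rewrite inE l6 al e eqxx.
Qed.

Lemma E5 : #|build (p, phi)| =
  #|[set j : 'I_7 | hasb p j]| + #|[set v : 'I_6 | ~~ (covb p v || za v)]|.
Proof.
have disj : [set hedge j | j : 'I_7 & hasb p j] :&:
            [set lf l | l : 'I_n & (6 <= l) && (phi (att l) == Some l)] = set0.
  apply/setP => s; rewrite !inE; apply/negP => /andP[/imsetP[j _ ->] /imsetP[l]].
  by rewrite inE => /andP[l6 _] /eqP; rewrite (negbTE (hedge_neq_lf (ltn_ord j) l6)).
have := cardsUI [set hedge j | j : 'I_7 & hasb p j]
            [set lf l | l : 'I_n & (6 <= l) && (phi (att l) == Some l)].
rewrite disj cards0 addn0 /build /= => ->.
rewrite card_in_imset; last first.
  by move=> j k _ _ /(hedge_inj (ltn_ord j) (ltn_ord k)) E; apply: val_inj.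
congr addn.
rewrite card_in_imset; last first.
  by move=> l l' ; rewrite inE => /andP[l6 _] _; apply: lf_inj.
rewrite -(card_in_imset (f := att)); last first.
  move=> l l'; rewrite !inE => /andP[_ /eqP e] /andP[_ /eqP e'] aa.
  by move: e'; rewrite -aa e => -[].
apply: eq_card => v; apply/imsetP/idP.
  move=> [l]; rewrite inE => /andP[l6 /eqP e] ->; rewrite inE.
  by apply/negP => c; rewrite F1 // in e.
rewrite inE => c; have [l e /andP[l6 /eqP al]] := F2 c.
by exists l => //; rewrite inE l6 al e eqxx.
Qed.

End Tg.

Lemma Tgt_inv q : Tgt q -> [/\ hmb q.1, all (fun j => ~~ [&& ~~ covb q.1 (e1n j), ~~ covb q.1 (e2n j),
                               za (e1n j) & za (e2n j)]) (iota 0 7) & forall v, q.2 v \in Fset q.1 v].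
Proof. by case/andP => /andP[h v] /familyP f. Qed.


Lemma sum_max (f : {set {set 'I_n}} -> nat) :
  \sum_(M | maximal_matching ge M) f M = \sum_(q | Tgt q) f (build q).
Proof.
rewrite (reindex_onto build enc) => [|M]; last first.
  by rewrite maximalP => /andP[mM _]; apply: E1.
apply: eq_bigl => q; apply/andP/idP => [[HM /eqP E]|Tq].
  by rewrite -E; apply: E2.
case: q Tq => p phi Tq; have [h v fm] := Tgt_inv Tq.
by split; [apply: E3 | rewrite E4].
Qed.

Lemma cardF p v : #|Fset p v| = if covb p v || za v then 1 else a v.
Proof.
rewrite /Fset; case: ifP => _; first exact: card1.
rewrite /a -(card_imset _ (@Some_inj _)); apply: eq_card => o.
case: o => [x|]; last by rewrite inE; apply/esym/negP => /imsetP[].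
by rewrite (mem_imset _ _ (@Some_inj _)) !inE.
Qed.

Lemma card_fam p : #|family (Fset p)| = \prod_(v : 'I_6) (if covb p v || za v then 1 else a v).
Proof.
rewrite card_family foldrE big_map big_enum /=.
by apply: eq_bigr => v _; rewrite cardF.
Qed.

Lemma countD : #|[set M | maximal_matching ge M]| =
  \sum_(p : B7 | validb za p) \prod_(v : 'I_6) (if covb p v || za v then 1 else a v).
Proof.
rewrite -sum1_card (eq_bigl (fun M => maximal_matching ge M)) => [|M]; last by rewrite inE.
rewrite (sum_max (fun _ => 1)).
rewrite -(@pair_big_dep _ _ _ _ _ (fun p => validb za p) (fun p phi => phi \in family (Fset p)) (fun _ _ => 1)).
by apply: eq_bigr => p _; rewrite sum1_card card_fam.
Qed.

Lemma countN : \sum_(M | maximal_matching ge M) #|M| =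
  \sum_(p : B7 | validb za p) (#|[set j : 'I_7 | hasb p j]| + #|[set v : 'I_6 | ~~ (covb p v || za v)]|) *
      \prod_(v : 'I_6) (if covb p v || za v then 1 else a v).
Proof.
rewrite sum_max.
rewrite (eq_bigr (fun q => #|[set j : 'I_7 | hasb q.1 j]| + #|[set v : 'I_6 | ~~ (covb q.1 v || za v)]|)); last first.
  by case=> p phi Tq; have [h v f] := Tgt_inv Tq; rewrite E5.
rewrite -(@pair_big_dep _ _ _ _ _ (fun p => validb za p) (fun p phi => phi \in family (Fset p))
   (fun p _ => #|[set j : 'I_7 | hasb p j]| + #|[set v : 'I_6 | ~~ (covb p v || za v)]|)).
by apply: eq_bigr => p _; rewrite sum_nat_const card_fam mulnC.
Qed.

End Graph.


Definition cw (a : nat -> nat) (p : B7) (v : nat) : nat :=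
  if covb p v || (a v == 0) then 1 else a v.
Definition nz (a : nat -> nat) (p : B7) (v : nat) : nat := ~~ (covb p v || (a v == 0)).
Definition wD (a : nat -> nat) (p : B7) : nat :=
  cw a p 0 * cw a p 1 * cw a p 2 * cw a p 3 * cw a p 4 * cw a p 5.
Definition wS (a : nat -> nat) (p : B7) : nat :=
  hasb p 0 + hasb p 1 + hasb p 2 + hasb p 3 + hasb p 4 + hasb p 5 + hasb p 6 +
  (nz a p 0 + nz a p 1 + nz a p 2 + nz a p 3 + nz a p 4 + nz a p 5).
Definition DF (a : nat -> nat) : nat :=
  \sum_(p : B7) (if validb (fun k => a k == 0) p then wD a p else 0).
Definition NF (a : nat -> nat) : nat :=
  \sum_(p : B7) (if validb (fun k => a k == 0) p then wS a p * wD a p else 0).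
Definition a6 (x0 x1 x2 x3 x4 x5 : nat) (k : nat) : nat := nth 0 [:: x0; x1; x2; x3; x4; x5] k.

Lemma wD_big (a : nat -> nat) p : \prod_(v < 6) cw a p v = wD a p.
Proof. by rewrite !big_ord_recr big_ord0 /= mul1n. Qed.

Lemma card_sum k (P : pred 'I_k) : #|[set j | P j]| = \sum_(j < k) (P j : nat).
Proof.
rewrite -sum1_card big_mkcond /=; apply: eq_bigr => j _; rewrite inE; by case: (P j).
Qed.

Lemma wS_big (a : nat -> nat) p : #|[set j : 'I_7 | hasb p j]| + #|[set v : 'I_6 | ~~ (covb p v || (a v == 0))]| = wS a p.
Proof. by rewrite !card_sum !big_ord_recr !big_ord0 /= !add0n. Qed.

Lemma sum_prod_bool (A : finType) (F : A * bool -> nat) :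
  \sum_(p : A * bool) F p = \sum_(a : A) (F (a, true) + F (a, false)).
Proof.
rewrite (eq_bigr (fun p => F (p.1, p.2))) => [|[]//].
rewrite -(pair_bigA _ (fun a b => F (a, b))) /=.
by apply: eq_bigr => a _; rewrite big_bool.
Qed.

Lemma lt_wit (Q L R : nat) : R = L + Q.+1 -> L < R.
Proof. by move=> ->; rewrite -addSnnS leq_addr. Qed.

Ltac expand := rewrite /DF /NF !sum_prod_bool !big_bool /=;
  rewrite /wD /wS /cw /nz /a6 /=.

Lemma DT_eq m : 0 < m -> DF (a6 0 0 m 0 0 0) = 3 * m + 7.
Proof. case: m => [|m] // _; expand; ring. Qed.

Lemma NT_eq m : 0 < m -> NF (a6 0 0 m 0 0 0) = 9 * m + 15.
Proof. case: m => [|m] // _; expand; ring. Qed.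

Lemma final x0 x1 x2 x3 x4 x5 : 0 < x2 -> 0 < x3 ->
  NF (a6 0 0 (x0 + x1 + x2 + x3 + x4 + x5) 0 0 0) * DF (a6 x0 x1 x2 x3 x4 x5) <
  NF (a6 x0 x1 x2 x3 x4 x5) * DF (a6 0 0 (x0 + x1 + x2 + x3 + x4 + x5) 0 0 0).
Proof.
move=> h2 h3.
have m0 : 0 < x0 + x1 + x2 + x3 + x4 + x5.
  by lia.
rewrite DT_eq // NT_eq //.
case: x2 h2 m0 => [|b2] // _ _; case: x3 h3 => [|b3] // _.
(case: x0 => [|b0]; case: x1 => [|b1]; case: x4 => [|b4]; case: x5 => [|b5]);
 [ expand; apply: (@lt_wit (20 + 22 * b3 + 3 * b3 * b3 + 22 * b2 + 25 * b2 * b3 + 3 * b2 * b3 * b3 + 3 * b2 * b2 + 3 * b2 * b2 * b3)); ring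
 | expand; apply: (@lt_wit (99 + 77 * b5 + 6 * b5 * b5 + 71 * b3 + 46 * b3 * b5 + 3 * b3 * b5 * b5 + 6 * b3 * b3 + 3 * b3 * b3 * b5 + 75 * b2 + 59 * b2 * b5 + 6 * b2 * b5 * b5 + 59 * b2 * b3 + 37 * b2 * b3 * b5 + 3 * b2 * b3 * b5 * b5 + 6 * b2 * b3 * b3 + 3 * b2 * b3 * b3 * b5 + 9 * b2 * b2 + 6 * b2 * b2 * b5 + 6 * b2 * b2 * b3 + 3 * b2 * b2 * b3 * b5)); ring
 | expand; apply: (@lt_wit (99 + 77 * b4 + 6 * b4 * b4 + 71 * b3 + 46 * b3 * b4 + 3 * b3 * b4 * b4 + 6 * b3 * b3 + 3 * b3 * b3 * b4 + 75 * b2 + 59 * b2 * b4 + 6 * b2 * b4 * b4 + 59 * b2 * b3 + 37 * b2 * b3 * b4 + 3 * b2 * b3 * b4 * b4 + 6 * b2 * b3 * b3 + 3 * b2 * b3 * b3 * b4 + 9 * b2 * b2 + 6 * b2 * b2 * b4 + 6 * b2 * b2 * b3 + 3 * b2 * b2 * b3 * b4)); ring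
 | expand; apply: (@lt_wit (235 + 180 * b5 + 18 * b5 * b5 + 180 * b4 + 155 * b4 * b5 + 15 * b4 * b5 * b5 + 18 * b4 * b4 + 15 * b4 * b4 * b5 + 155 * b3 + 127 * b3 * b5 + 12 * b3 * b5 * b5 + 127 * b3 * b4 + 133 * b3 * b4 * b5 + 12 * b3 * b4 * b5 * b5 + 12 * b3 * b4 * b4 + 12 * b3 * b4 * b4 * b5 + 15 * b3 * b3 + 12 * b3 * b3 * b5 + 12 * b3 * b3 * b4 + 12 * b3 * b3 * b4 * b5 + 143 * b2 + 102 * b2 * b5 + 9 * b2 * b5 * b5 + 102 * b2 * b4 + 77 * b2 * b4 * b5 + 6 * b2 * b4 * b5 * b5 + 9 * b2 * b4 * b4 + 6 * b2 * b4 * b4 * b5 + 99 * b2 * b3 + 74 * b2 * b3 * b5 + 6 * b2 * b3 * b5 * b5 + 74 * b2 * b3 * b4 + 74 * b2 * b3 * b4 * b5 + 6 * b2 * b3 * b4 * b5 * b5 + 6 * b2 * b3 * b4 * b4 + 6 * b2 * b3 * b4 * b4 * b5 + 9 * b2 * b3 * b3 + 6 * b2 * b3 * b3 * b5 + 6 * b2 * b3 * b3 * b4 + 6 * b2 * b3 * b3 * b4 * b5 + 15 * b2 * b2 + 9 * b2 * b2 * b5 + 9 * b2 * b2 * b4 + 6 * b2 * b2 * b4 * b5 + 9 * b2 * b2 * b3 + 6 * b2 * b2 * b3 * b5 + 6 * b2 * b2 * b3 * b4 + 6 * b2 * b2 * b3 * b4 * b5)); ring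
 | expand; apply: (@lt_wit (99 + 75 * b3 + 9 * b3 * b3 + 71 * b2 + 59 * b2 * b3 + 6 * b2 * b3 * b3 + 6 * b2 * b2 + 6 * b2 * b2 * b3 + 77 * b1 + 59 * b1 * b3 + 6 * b1 * b3 * b3 + 46 * b1 * b2 + 37 * b1 * b2 * b3 + 3 * b1 * b2 * b3 * b3 + 3 * b1 * b2 * b2 + 3 * b1 * b2 * b2 * b3 + 6 * b1 * b1 + 6 * b1 * b1 * b3 + 3 * b1 * b1 * b2 + 3 * b1 * b1 * b2 * b3)); ring
 | expand; apply: (@lt_wit (271 + 198 * b5 + 18 * b5 * b5 + 186 * b3 + 117 * b3 * b5 + 9 * b3 * b5 * b5 + 18 * b3 * b3 + 9 * b3 * b3 * b5 + 186 * b2 + 136 * b2 * b5 + 12 * b2 * b5 * b5 + 136 * b2 * b3 + 83 * b2 * b3 * b5 + 6 * b2 * b3 * b5 * b5 + 12 * b2 * b3 * b3 + 6 * b2 * b3 * b3 * b5 + 18 * b2 * b2 + 12 * b2 * b2 * b5 + 12 * b2 * b2 * b3 + 6 * b2 * b2 * b3 * b5 + 198 * b1 + 142 * b1 * b5 + 12 * b1 * b5 * b5 + 136 * b1 * b3 + 83 * b1 * b3 * b5 + 6 * b1 * b3 * b5 * b5 + 12 * b1 * b3 * b3 + 6 * b1 * b3 * b3 * b5 + 117 * b1 * b2 + 83 * b1 * b2 * b5 + 6 * b1 * b2 * b5 * b5 + 83 * b1 * b2 * b3 + 49 * b1 * b2 * b3 * b5 + 3 * b1 * b2 * b3 * b5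 * b5 + 6 * b1 * b2 * b3 * b3 + 3 * b1 * b2 * b3 * b3 * b5 + 9 * b1 * b2 * b2 + 6 * b1 * b2 * b2 * b5 + 6 * b1 * b2 * b2 * b3 + 3 * b1 * b2 * b2 * b3 * b5 + 18 * b1 * b1 + 12 * b1 * b1 * b5 + 12 * b1 * b1 * b3 + 6 * b1 * b1 * b3 * b5 + 9 * b1 * b1 * b2 + 6 * b1 * b1 * b2 * b5 + 6 * b1 * b1 * b2 * b3 + 3 * b1 * b1 * b2 * b3 * b5)); ring
 | expand; apply: (@lt_wit (271 + 198 * b4 + 18 * b4 * b4 + 186 * b3 + 117 * b3 * b4 + 9 * b3 * b4 * b4 + 18 * b3 * b3 + 9 * b3 * b3 * b4 + 186 * b2 + 136 * b2 * b4 + 12 * b2 * b4 * b4 + 136 * b2 * b3 + 83 * b2 * b3 * b4 + 6 * b2 * b3 * b4 * b4 + 12 * b2 * b3 * b3 + 6 * b2 * b3 * b3 * b4 + 18 * b2 * b2 + 12 * b2 * b2 * b4 + 12 * b2 * b2 * b3 + 6 * b2 * b2 * b3 * b4 + 198 * b1 + 142 * b1 * b4 + 12 * b1 * b4 * b4 + 136 * b1 * b3 + 83 * b1 * b3 * b4 + 6 * b1 * b3 * b4 * b4 + 12 * b1 * b3 * b3 + 6 * b1 * b3 * b3 * b4 + 117 * b1 * b2 + 83 * b1 * b2 * b4 + 6 * b1 * b2 * b4 * b4 + 83 * b1 * b2 * b3 + 49 * b1 * b2 * b3 * b4 + 3 * b1 * b2 * b3 * b4 * b4 + 6 * b1 *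 b2 * b3 * b3 + 3 * b1 * b2 * b3 * b3 * b4 + 9 * b1 * b2 * b2 + 6 * b1 * b2 * b2 * b4 + 6 * b1 * b2 * b2 * b3 + 3 * b1 * b2 * b2 * b3 * b4 + 18 * b1 * b1 + 12 * b1 * b1 * b4 + 12 * b1 * b1 * b3 + 6 * b1 * b1 * b3 * b4 + 9 * b1 * b1 * b2 + 6 * b1 * b1 * b2 * b4 + 6 * b1 * b1 * b2 * b3 + 3 * b1 * b1 * b2 * b3 * b4)); ring
 | expand; apply: (@lt_wit (515 + 378 * b5 + 36 * b5 * b5 + 378 * b4 + 306 * b4 * b5 + 27 * b4 * b5 * b5 + 36 * b4 * b4 + 27 * b4 * b4 * b5 + 322 * b3 + 244 * b3 * b5 + 21 * b3 * b5 * b5 + 244 * b3 * b4 + 247 * b3 * b4 * b5 + 21 * b3 * b4 * b5 * b5 + 21 * b3 * b4 * b4 + 21 * b3 * b4 * b4 * b5 + 30 * b3 * b3 + 21 * b3 * b3 * b5 + 21 * b3 * b3 * b4 + 21 * b3 * b3 * b4 * b5 + 322 * b2 + 222 * b2 * b5 + 18 * b2 * b5 * b5 + 222 * b2 * b4 + 163 * b2 * b4 * b5 + 12 * b2 * b4 * b5 * b5 + 18 * b2 * b4 * b4 + 12 * b2 * b4 * b4 * b5 + 216 * b2 * b3 + 157 * b2 * b3 * b5 + 12 * b2 * b3 * b5 * b5 + 157 * b2 * b3 * b4 + 157 * b2 * b3 * b4 * b5 + 12 * b2 * b3 * b4 * b5 * b5 + 12 * b2 * b3 * b4 * b4 + 12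 * b2 * b3 * b4 * b4 * b5 + 18 * b2 * b3 * b3 + 12 * b2 * b3 * b3 * b5 + 12 * b2 * b3 * b3 * b4 + 12 * b2 * b3 * b3 * b4 * b5 + 30 * b2 * b2 + 18 * b2 * b2 * b5 + 18 * b2 * b2 * b4 + 12 * b2 * b2 * b4 * b5 + 18 * b2 * b2 * b3 + 12 * b2 * b2 * b3 * b5 + 12 * b2 * b2 * b3 * b4 + 12 * b2 * b2 * b3 * b4 * b5 + 356 * b1 + 253 * b1 * b5 + 21 * b1 * b5 * b5 + 253 * b1 * b4 + 197 * b1 * b4 * b5 + 15 * b1 * b4 * b5 * b5 + 21 * b1 * b4 * b4 + 15 * b1 * b4 * b4 * b5 + 219 * b1 * b3 + 160 * b1 * b3 * b5 + 12 * b1 * b3 * b5 * b5 + 160 * b1 * b3 * b4 + 160 * b1 * b3 * b4 * b5 + 12 * b1 * b3 * b4 * b5 * b5 + 12 * b1 * b3 * b4 * b4 + 12 * b1 * b3 * b4 * b4 * b5 + 18 * b1 * b3 * b3 + 12 * b1 * b3 * b3 * b5 + 12 * b1 * b3 * b3 * b4 + 12 * b1 * b3 * b3 * b4 * b5 + 197 * b1 * b2 + 132 * b1 * b2 * b5 + 9 * b1 * b2 * b5 * b5 + 132 * b1 * b2 * b4 + 95 * b1 * b2 * b4 * b5 + 6 * b1 * b2 * b4 * b5 * b5 + 9 * b1 * b2 * b4 * b4 + 6 * b1 * b2 * b4 * b4 * b5 + 129 * b1 * b2 * b3 + 92 * b1 * b2 * b3 * b5 + 6 * b1 * b2 * b3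 * b5 * b5 + 92 * b1 * b2 * b3 * b4 + 92 * b1 * b2 * b3 * b4 * b5 + 6 * b1 * b2 * b3 * b4 * b5 * b5 + 6 * b1 * b2 * b3 * b4 * b4 + 6 * b1 * b2 * b3 * b4 * b4 * b5 + 9 * b1 * b2 * b3 * b3 + 6 * b1 * b2 * b3 * b3 * b5 + 6 * b1 * b2 * b3 * b3 * b4 + 6 * b1 * b2 * b3 * b3 * b4 * b5 + 15 * b1 * b2 * b2 + 9 * b1 * b2 * b2 * b5 + 9 * b1 * b2 * b2 * b4 + 6 * b1 * b2 * b2 * b4 * b5 + 9 * b1 * b2 * b2 * b3 + 6 * b1 * b2 * b2 * b3 * b5 + 6 * b1 * b2 * b2 * b3 * b4 + 6 * b1 * b2 * b2 * b3 * b4 * b5 + 33 * b1 * b1 + 21 * b1 * b1 * b5 + 21 * b1 * b1 * b4 + 15 * b1 * b1 * b4 * b5 + 18 * b1 * b1 * b3 + 12 * b1 * b1 * b3 * b5 + 12 * b1 * b1 * b3 * b4 + 12 * b1 * b1 * b3 * b4 * b5 + 15 * b1 * b1 * b2 + 9 * b1 * b1 * b2 * b5 + 9 * b1 * b1 * b2 * b4 + 6 * b1 * b1 * b2 * b4 * b5 + 9 * b1 * b1 * b2 * b3 + 6 * b1 * b1 * b2 * b3 * b5 + 6 * b1 * b1 * b2 * b3 * b4 + 6 * b1 * b1 * b2 * b3 * b4 * b5)); ring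
 | expand; apply: (@lt_wit (99 + 75 * b3 + 9 * b3 * b3 + 71 * b2 + 59 * b2 * b3 + 6 * b2 * b3 * b3 + 6 * b2 * b2 + 6 * b2 * b2 * b3 + 77 * b0 + 59 * b0 * b3 + 6 * b0 * b3 * b3 + 46 * b0 * b2 + 37 * b0 * b2 * b3 + 3 * b0 * b2 * b3 * b3 + 3 * b0 * b2 * b2 + 3 * b0 * b2 * b2 * b3 + 6 * b0 * b0 + 6 * b0 * b0 * b3 + 3 * b0 * b0 * b2 + 3 * b0 * b0 * b2 * b3)); ring
 | expand; apply: (@lt_wit (271 + 198 * b5 + 18 * b5 * b5 + 186 * b3 + 117 * b3 * b5 + 9 * b3 * b5 * b5 + 18 * b3 * b3 + 9 * b3 * b3 * b5 + 186 * b2 + 136 * b2 * b5 + 12 * b2 * b5 * b5 + 136 * b2 * b3 + 83 * b2 * b3 * b5 + 6 * b2 * b3 * b5 * b5 + 12 * b2 * b3 * b3 + 6 * b2 * b3 * b3 * b5 + 18 * b2 * b2 + 12 * b2 * b2 * b5 + 12 * b2 * b2 * b3 + 6 * b2 * b2 * b3 * b5 + 198 * b0 + 142 * b0 * b5 + 12 * b0 * b5 * b5 + 136 * b0 * b3 + 83 * b0 * b3 * b5 + 6 * b0 * b3 * b5 * b5 + 12 * b0 * b3 * b3 + 6 * b0 * b3 * b3 * b5 + 117 * b0 * b2 + 83 * b0 * b2 * b5 + 6 * b0 * b2 * b5 * b5 + 83 * b0 * b2 * b3 + 49 * b0 * b2 * b3 * b5 + 3 * b0 * b2 * b3 * b5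 * b5 + 6 * b0 * b2 * b3 * b3 + 3 * b0 * b2 * b3 * b3 * b5 + 9 * b0 * b2 * b2 + 6 * b0 * b2 * b2 * b5 + 6 * b0 * b2 * b2 * b3 + 3 * b0 * b2 * b2 * b3 * b5 + 18 * b0 * b0 + 12 * b0 * b0 * b5 + 12 * b0 * b0 * b3 + 6 * b0 * b0 * b3 * b5 + 9 * b0 * b0 * b2 + 6 * b0 * b0 * b2 * b5 + 6 * b0 * b0 * b2 * b3 + 3 * b0 * b0 * b2 * b3 * b5)); ring
 | expand; apply: (@lt_wit (271 + 198 * b4 + 18 * b4 * b4 + 186 * b3 + 117 * b3 * b4 + 9 * b3 * b4 * b4 + 18 * b3 * b3 + 9 * b3 * b3 * b4 + 186 * b2 + 136 * b2 * b4 + 12 * b2 * b4 * b4 + 136 * b2 * b3 + 83 * b2 * b3 * b4 + 6 * b2 * b3 * b4 * b4 + 12 * b2 * b3 * b3 + 6 * b2 * b3 * b3 * b4 + 18 * b2 * b2 + 12 * b2 * b2 * b4 + 12 * b2 * b2 * b3 + 6 * b2 * b2 * b3 * b4 + 198 * b0 + 142 * b0 * b4 + 12 * b0 * b4 * b4 + 136 * b0 * b3 + 83 * b0 * b3 * b4 + 6 * b0 * b3 * b4 * b4 + 12 * b0 * b3 * b3 + 6 * b0 * b3 * b3 * b4 + 117 * b0 * b2 + 83 * b0 * b2 * b4 + 6 * b0 * b2 * b4 * b4 + 83 * b0 * b2 * b3 + 49 * b0 * b2 * b3 * b4 + 3 * b0 * b2 * b3 * b4 * b4 + 6 * b0 *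 b2 * b3 * b3 + 3 * b0 * b2 * b3 * b3 * b4 + 9 * b0 * b2 * b2 + 6 * b0 * b2 * b2 * b4 + 6 * b0 * b2 * b2 * b3 + 3 * b0 * b2 * b2 * b3 * b4 + 18 * b0 * b0 + 12 * b0 * b0 * b4 + 12 * b0 * b0 * b3 + 6 * b0 * b0 * b3 * b4 + 9 * b0 * b0 * b2 + 6 * b0 * b0 * b2 * b4 + 6 * b0 * b0 * b2 * b3 + 3 * b0 * b0 * b2 * b3 * b4)); ring
 | expand; apply: (@lt_wit (515 + 378 * b5 + 36 * b5 * b5 + 378 * b4 + 306 * b4 * b5 + 27 * b4 * b5 * b5 + 36 * b4 * b4 + 27 * b4 * b4 * b5 + 322 * b3 + 244 * b3 * b5 + 21 * b3 * b5 * b5 + 244 * b3 * b4 + 247 * b3 * b4 * b5 + 21 * b3 * b4 * b5 * b5 + 21 * b3 * b4 * b4 + 21 * b3 * b4 * b4 * b5 + 30 * b3 * b3 + 21 * b3 * b3 * b5 + 21 * b3 * b3 * b4 + 21 * b3 * b3 * b4 * b5 + 322 * b2 + 222 * b2 * b5 + 18 * b2 * b5 * b5 + 222 * b2 * b4 + 163 * b2 * b4 * b5 + 12 * b2 * b4 * b5 * b5 + 18 * b2 * b4 * b4 + 12 * b2 * b4 * b4 * b5 + 216 * b2 * b3 + 157 * b2 * b3 * b5 + 12 * b2 * b3 * b5 * b5 + 157 * b2 * b3 * b4 + 157 * b2 * b3 * b4 * b5 + 12 * b2 * b3 * b4 * b5 * b5 + 12 * b2 * b3 * b4 * b4 + 12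 * b2 * b3 * b4 * b4 * b5 + 18 * b2 * b3 * b3 + 12 * b2 * b3 * b3 * b5 + 12 * b2 * b3 * b3 * b4 + 12 * b2 * b3 * b3 * b4 * b5 + 30 * b2 * b2 + 18 * b2 * b2 * b5 + 18 * b2 * b2 * b4 + 12 * b2 * b2 * b4 * b5 + 18 * b2 * b2 * b3 + 12 * b2 * b2 * b3 * b5 + 12 * b2 * b2 * b3 * b4 + 12 * b2 * b2 * b3 * b4 * b5 + 356 * b0 + 253 * b0 * b5 + 21 * b0 * b5 * b5 + 253 * b0 * b4 + 197 * b0 * b4 * b5 + 15 * b0 * b4 * b5 * b5 + 21 * b0 * b4 * b4 + 15 * b0 * b4 * b4 * b5 + 219 * b0 * b3 + 160 * b0 * b3 * b5 + 12 * b0 * b3 * b5 * b5 + 160 * b0 * b3 * b4 + 160 * b0 * b3 * b4 * b5 + 12 * b0 * b3 * b4 * b5 * b5 + 12 * b0 * b3 * b4 * b4 + 12 * b0 * b3 * b4 * b4 * b5 + 18 * b0 * b3 * b3 + 12 * b0 * b3 * b3 * b5 + 12 * b0 * b3 * b3 * b4 + 12 * b0 * b3 * b3 * b4 * b5 + 197 * b0 * b2 + 132 * b0 * b2 * b5 + 9 * b0 * b2 * b5 * b5 + 132 * b0 * b2 * b4 + 95 * b0 * b2 * b4 * b5 + 6 * b0 * b2 * b4 * b5 * b5 + 9 * b0 * b2 * b4 * b4 + 6 * b0 * b2 * b4 * b4 * b5 + 129 * b0 * b2 * b3 + 92 * b0 * b2 * b3 * b5 + 6 * b0 * b2 * b3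 * b5 * b5 + 92 * b0 * b2 * b3 * b4 + 92 * b0 * b2 * b3 * b4 * b5 + 6 * b0 * b2 * b3 * b4 * b5 * b5 + 6 * b0 * b2 * b3 * b4 * b4 + 6 * b0 * b2 * b3 * b4 * b4 * b5 + 9 * b0 * b2 * b3 * b3 + 6 * b0 * b2 * b3 * b3 * b5 + 6 * b0 * b2 * b3 * b3 * b4 + 6 * b0 * b2 * b3 * b3 * b4 * b5 + 15 * b0 * b2 * b2 + 9 * b0 * b2 * b2 * b5 + 9 * b0 * b2 * b2 * b4 + 6 * b0 * b2 * b2 * b4 * b5 + 9 * b0 * b2 * b2 * b3 + 6 * b0 * b2 * b2 * b3 * b5 + 6 * b0 * b2 * b2 * b3 * b4 + 6 * b0 * b2 * b2 * b3 * b4 * b5 + 33 * b0 * b0 + 21 * b0 * b0 * b5 + 21 * b0 * b0 * b4 + 15 * b0 * b0 * b4 * b5 + 18 * b0 * b0 * b3 + 12 * b0 * b0 * b3 * b5 + 12 * b0 * b0 * b3 * b4 + 12 * b0 * b0 * b3 * b4 * b5 + 15 * b0 * b0 * b2 + 9 * b0 * b0 * b2 * b5 + 9 * b0 * b0 * b2 * b4 + 6 * b0 * b0 * b2 * b4 * b5 + 9 * b0 * b0 * b2 * b3 + 6 * b0 * b0 * b2 * b3 * b5 + 6 * b0 * b0 * b2 * b3 * b4 + 6 * b0 * b0 * b2 * b3 * b4 * b5)); ring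
 | expand; apply: (@lt_wit (235 + 143 * b3 + 15 * b3 * b3 + 155 * b2 + 99 * b2 * b3 + 9 * b2 * b3 * b3 + 15 * b2 * b2 + 9 * b2 * b2 * b3 + 180 * b1 + 102 * b1 * b3 + 9 * b1 * b3 * b3 + 127 * b1 * b2 + 74 * b1 * b2 * b3 + 6 * b1 * b2 * b3 * b3 + 12 * b1 * b2 * b2 + 6 * b1 * b2 * b2 * b3 + 18 * b1 * b1 + 9 * b1 * b1 * b3 + 12 * b1 * b1 * b2 + 6 * b1 * b1 * b2 * b3 + 180 * b0 + 102 * b0 * b3 + 9 * b0 * b3 * b3 + 127 * b0 * b2 + 74 * b0 * b2 * b3 + 6 * b0 * b2 * b3 * b3 + 12 * b0 * b2 * b2 + 6 * b0 * b2 * b2 * b3 + 155 * b0 * b1 + 77 * b0 * b1 * b3 + 6 * b0 * b1 * b3 * b3 + 133 * b0 * b1 * b2 + 74 * b0 * b1 * b2 * b3 + 6 * b0 * b1 * b2 * b3 * b3 + 12 * b0 * b1 * b2 * b2 + 6 * b0 * b1 * b2 * b2 * b3 + 15 * b0 * b1 * b1 + 6 * b0 * b1 * b1 * b3 + 12 * b0 * b1 * b1 * b2 + 6 * b0 * b1 * b1 * b2 * b3 + 18 * b0 * b0 + 9 * b0 * b0 * b3 + 12 * b0 * b0 * b2 + 6 * b0 * b0 * b2 * b3 + 15 * b0 * b0 * b1 + 6 * b0 * b0 * b1 * b3 + 12 * b0 * b0 * b1 * b2 + 6 * b0 * b0 * b1 * b2 * b3)); ring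
 | expand; apply: (@lt_wit (515 + 356 * b5 + 33 * b5 * b5 + 322 * b3 + 197 * b3 * b5 + 15 * b3 * b5 * b5 + 30 * b3 * b3 + 15 * b3 * b3 * b5 + 322 * b2 + 219 * b2 * b5 + 18 * b2 * b5 * b5 + 216 * b2 * b3 + 129 * b2 * b3 * b5 + 9 * b2 * b3 * b5 * b5 + 18 * b2 * b3 * b3 + 9 * b2 * b3 * b3 * b5 + 30 * b2 * b2 + 18 * b2 * b2 * b5 + 18 * b2 * b2 * b3 + 9 * b2 * b2 * b3 * b5 + 378 * b1 + 253 * b1 * b5 + 21 * b1 * b5 * b5 + 222 * b1 * b3 + 132 * b1 * b3 * b5 + 9 * b1 * b3 * b5 * b5 + 18 * b1 * b3 * b3 + 9 * b1 * b3 * b3 * b5 + 244 * b1 * b2 + 160 * b1 * b2 * b5 + 12 * b1 * b2 * b5 * b5 + 157 * b1 * b2 * b3 + 92 * b1 * b2 * b3 * b5 + 6 * b1 * b2 * b3 * b5 * b5 + 12 * b1 * b2 * b3 * b3 + 6 * b1 * b2 * b3 * b3 * b5 + 21 * b1 * b2 * b2 + 12 * b1 * b2 * b2 * b5 + 12 * b1 * b2 * b2 * b3 + 6 * b1 * b2 * b2 * b3 * b5 + 36 * b1 * b1 + 21 * b1 * b1 * b5 + 18 * b1 * b1 * b3 + 9 * b1 * b1 * b3 * b5 + 21 * b1 * b1 * b2 + 12 * b1 * b1 * b2 * b5 + 12 * b1 * b1 * b2 * b3 + 6 * b1 * b1 * b2 * b3 * b5 + 378 * b0 + 253 * b0 *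 b5 + 21 * b0 * b5 * b5 + 222 * b0 * b3 + 132 * b0 * b3 * b5 + 9 * b0 * b3 * b5 * b5 + 18 * b0 * b3 * b3 + 9 * b0 * b3 * b3 * b5 + 244 * b0 * b2 + 160 * b0 * b2 * b5 + 12 * b0 * b2 * b5 * b5 + 157 * b0 * b2 * b3 + 92 * b0 * b2 * b3 * b5 + 6 * b0 * b2 * b3 * b5 * b5 + 12 * b0 * b2 * b3 * b3 + 6 * b0 * b2 * b3 * b3 * b5 + 21 * b0 * b2 * b2 + 12 * b0 * b2 * b2 * b5 + 12 * b0 * b2 * b2 * b3 + 6 * b0 * b2 * b2 * b3 * b5 + 306 * b0 * b1 + 197 * b0 * b1 * b5 + 15 * b0 * b1 * b5 * b5 + 163 * b0 * b1 * b3 + 95 * b0 * b1 * b3 * b5 + 6 * b0 * b1 * b3 * b5 * b5 + 12 * b0 * b1 * b3 * b3 + 6 * b0 * b1 * b3 * b3 * b5 + 247 * b0 * b1 * b2 + 160 * b0 * b1 * b2 * b5 + 12 * b0 * b1 * b2 * b5 * b5 + 157 * b0 * b1 * b2 * b3 + 92 * b0 * b1 * b2 * b3 * b5 + 6 * b0 * b1 * b2 * b3 * b5 * b5 + 12 * b0 * b1 * b2 * b3 * b3 + 6 * b0 * b1 * b2 * b3 * b3 * b5 + 21 * b0 * b1 * b2 * b2 + 12 * b0 * b1 * b2 * b2 * b5 + 12 * b0 * b1 * b2 * b2 * b3 + 6 * b0 * b1 * b2 * b2 * b3 * b5 + 27 * b0 * b1 * b1 + 15 * b0 * b1 * b1 *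 b5 + 12 * b0 * b1 * b1 * b3 + 6 * b0 * b1 * b1 * b3 * b5 + 21 * b0 * b1 * b1 * b2 + 12 * b0 * b1 * b1 * b2 * b5 + 12 * b0 * b1 * b1 * b2 * b3 + 6 * b0 * b1 * b1 * b2 * b3 * b5 + 36 * b0 * b0 + 21 * b0 * b0 * b5 + 18 * b0 * b0 * b3 + 9 * b0 * b0 * b3 * b5 + 21 * b0 * b0 * b2 + 12 * b0 * b0 * b2 * b5 + 12 * b0 * b0 * b2 * b3 + 6 * b0 * b0 * b2 * b3 * b5 + 27 * b0 * b0 * b1 + 15 * b0 * b0 * b1 * b5 + 12 * b0 * b0 * b1 * b3 + 6 * b0 * b0 * b1 * b3 * b5 + 21 * b0 * b0 * b1 * b2 + 12 * b0 * b0 * b1 * b2 * b5 + 12 * b0 * b0 * b1 * b2 * b3 + 6 * b0 * b0 * b1 * b2 * b3 * b5)); ring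
 | expand; apply: (@lt_wit (515 + 356 * b4 + 33 * b4 * b4 + 322 * b3 + 197 * b3 * b4 + 15 * b3 * b4 * b4 + 30 * b3 * b3 + 15 * b3 * b3 * b4 + 322 * b2 + 219 * b2 * b4 + 18 * b2 * b4 * b4 + 216 * b2 * b3 + 129 * b2 * b3 * b4 + 9 * b2 * b3 * b4 * b4 + 18 * b2 * b3 * b3 + 9 * b2 * b3 * b3 * b4 + 30 * b2 * b2 + 18 * b2 * b2 * b4 + 18 * b2 * b2 * b3 + 9 * b2 * b2 * b3 * b4 + 378 * b1 + 253 * b1 * b4 + 21 * b1 * b4 * b4 + 222 * b1 * b3 + 132 * b1 * b3 * b4 + 9 * b1 * b3 * b4 * b4 + 18 * b1 * b3 * b3 + 9 * b1 * b3 * b3 * b4 + 244 * b1 * b2 + 160 * b1 * b2 * b4 + 12 * b1 * b2 * b4 * b4 + 157 * b1 * b2 * b3 + 92 * b1 * b2 * b3 * b4 + 6 * b1 * b2 * b3 * b4 * b4 + 12 * b1 * b2 * b3 * b3 + 6 * b1 * b2 * b3 * b3 * b4 + 21 * b1 * b2 * b2 + 12 * b1 * b2 * b2 * b4 + 12 * b1 * b2 * b2 * b3 + 6 * b1 * b2 * b2 * b3 * b4 + 36 * b1 * b1 + 21 * b1 * b1 * b4 + 18 * b1 * b1 * b3 + 9 * b1 * b1 * b3 * b4 + 21 * b1 * b1 * b2 + 12 * b1 * b1 * b2 * b4 + 12 * b1 * b1 * b2 * b3 + 6 * b1 * b1 * b2 * b3 * b4 + 378 * b0 + 253 * b0 *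 b4 + 21 * b0 * b4 * b4 + 222 * b0 * b3 + 132 * b0 * b3 * b4 + 9 * b0 * b3 * b4 * b4 + 18 * b0 * b3 * b3 + 9 * b0 * b3 * b3 * b4 + 244 * b0 * b2 + 160 * b0 * b2 * b4 + 12 * b0 * b2 * b4 * b4 + 157 * b0 * b2 * b3 + 92 * b0 * b2 * b3 * b4 + 6 * b0 * b2 * b3 * b4 * b4 + 12 * b0 * b2 * b3 * b3 + 6 * b0 * b2 * b3 * b3 * b4 + 21 * b0 * b2 * b2 + 12 * b0 * b2 * b2 * b4 + 12 * b0 * b2 * b2 * b3 + 6 * b0 * b2 * b2 * b3 * b4 + 306 * b0 * b1 + 197 * b0 * b1 * b4 + 15 * b0 * b1 * b4 * b4 + 163 * b0 * b1 * b3 + 95 * b0 * b1 * b3 * b4 + 6 * b0 * b1 * b3 * b4 * b4 + 12 * b0 * b1 * b3 * b3 + 6 * b0 * b1 * b3 * b3 * b4 + 247 * b0 * b1 * b2 + 160 * b0 * b1 * b2 * b4 + 12 * b0 * b1 * b2 * b4 * b4 + 157 * b0 * b1 * b2 * b3 + 92 * b0 * b1 * b2 * b3 * b4 + 6 * b0 * b1 * b2 * b3 * b4 * b4 + 12 * b0 * b1 * b2 * b3 * b3 + 6 * b0 * b1 * b2 * b3 * b3 * b4 + 21 * b0 * b1 * b2 * b2 + 12 * b0 * b1 * b2 * b2 * b4 + 12 * b0 * b1 * b2 * b2 * b3 + 6 * b0 * b1 * b2 * b2 * b3 * b4 + 27 * b0 * b1 * b1 + 15 * b0 * b1 * b1 *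 b4 + 12 * b0 * b1 * b1 * b3 + 6 * b0 * b1 * b1 * b3 * b4 + 21 * b0 * b1 * b1 * b2 + 12 * b0 * b1 * b1 * b2 * b4 + 12 * b0 * b1 * b1 * b2 * b3 + 6 * b0 * b1 * b1 * b2 * b3 * b4 + 36 * b0 * b0 + 21 * b0 * b0 * b4 + 18 * b0 * b0 * b3 + 9 * b0 * b0 * b3 * b4 + 21 * b0 * b0 * b2 + 12 * b0 * b0 * b2 * b4 + 12 * b0 * b0 * b2 * b3 + 6 * b0 * b0 * b2 * b3 * b4 + 27 * b0 * b0 * b1 + 15 * b0 * b0 * b1 * b4 + 12 * b0 * b0 * b1 * b3 + 6 * b0 * b0 * b1 * b3 * b4 + 21 * b0 * b0 * b1 * b2 + 12 * b0 * b0 * b1 * b2 * b4 + 12 * b0 * b0 * b1 * b2 * b3 + 6 * b0 * b0 * b1 * b2 * b3 * b4)); ring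
 | expand; apply: (@lt_wit (819 + 569 * b5 + 51 * b5 * b5 + 569 * b4 + 438 * b4 * b5 + 36 * b4 * b5 * b5 + 51 * b4 * b4 + 36 * b4 * b4 * b5 + 482 * b3 + 342 * b3 * b5 + 27 * b3 * b5 * b5 + 342 * b3 * b4 + 339 * b3 * b4 * b5 + 27 * b3 * b4 * b5 * b5 + 27 * b3 * b4 * b4 + 27 * b3 * b4 * b4 * b5 + 42 * b3 * b3 + 27 * b3 * b3 * b5 + 27 * b3 * b3 * b4 + 27 * b3 * b3 * b4 * b5 + 482 * b2 + 317 * b2 * b5 + 24 * b2 * b5 * b5 + 317 * b2 * b4 + 221 * b2 * b4 * b5 + 15 * b2 * b4 * b5 * b5 + 24 * b2 * b4 * b4 + 15 * b2 * b4 * b4 * b5 + 308 * b2 * b3 + 212 * b2 * b3 * b5 + 15 * b2 * b3 * b5 * b5 + 212 * b2 * b3 * b4 + 209 * b2 * b3 * b4 * b5 + 15 * b2 * b3 * b4 * b5 * b5 + 15 * b2 * b3 * b4 * b4 + 15 * b2 * b3 * b4 * b4 * b5 + 24 * b2 * b3 * b3 + 15 * b2 * b3 * b3 * b5 + 15 * b2 * b3 * b3 * b4 + 15 * b2 * b3 * b3 * b4 * b5 + 42 * b2 * b2 + 24 * b2 * b2 * b5 + 24 * b2 * b2 * b4 + 15 * b2 * b2 * b4 * b5 + 24 * b2 * b2 * b3 + 15 * b2 * b2 * b3 * b5 + 15 * b2 * b2 * b3 * b4 + 15 * b2 * b2 * b3 * b4 * b5 + 569 * b1 + 382 * b1 *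 b5 + 30 * b1 * b5 * b5 + 382 * b1 * b4 + 289 * b1 * b4 * b5 + 21 * b1 * b4 * b5 * b5 + 30 * b1 * b4 * b4 + 21 * b1 * b4 * b4 * b5 + 317 * b1 * b3 + 218 * b1 * b3 * b5 + 15 * b1 * b3 * b5 * b5 + 218 * b1 * b3 * b4 + 215 * b1 * b3 * b4 * b5 + 15 * b1 * b3 * b4 * b5 * b5 + 15 * b1 * b3 * b4 * b4 + 15 * b1 * b3 * b4 * b4 * b5 + 24 * b1 * b3 * b3 + 15 * b1 * b3 * b3 * b5 + 15 * b1 * b3 * b3 * b4 + 15 * b1 * b3 * b3 * b4 * b5 + 342 * b1 * b2 + 218 * b1 * b2 * b5 + 15 * b1 * b2 * b5 * b5 + 218 * b1 * b2 * b4 + 147 * b1 * b2 * b4 * b5 + 9 * b1 * b2 * b4 * b5 * b5 + 15 * b1 * b2 * b4 * b4 + 9 * b1 * b2 * b4 * b4 * b5 + 212 * b1 * b2 * b3 + 141 * b1 * b2 * b3 * b5 + 9 * b1 * b2 * b3 * b5 * b5 + 141 * b1 * b2 * b3 * b4 + 138 * b1 * b2 * b3 * b4 * b5 + 9 * b1 * b2 * b3 * b4 * b5 * b5 + 9 * b1 * b2 * b3 * b4 * b4 + 9 * b1 * b2 * b3 * b4 * b4 * b5 + 15 * b1 * b2 * b3 * b3 + 9 * b1 * b2 * b3 * b3 * b5 + 9 * b1 * b2 * b3 * b3 * b4 + 9 * b1 * b2 * b3 * b3 * b4 * b5 + 27 * b1 * b2 * b2 + 15 * b1 * b2 * b2 *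 b5 + 15 * b1 * b2 * b2 * b4 + 9 * b1 * b2 * b2 * b4 * b5 + 15 * b1 * b2 * b2 * b3 + 9 * b1 * b2 * b2 * b3 * b5 + 9 * b1 * b2 * b2 * b3 * b4 + 9 * b1 * b2 * b2 * b3 * b4 * b5 + 51 * b1 * b1 + 30 * b1 * b1 * b5 + 30 * b1 * b1 * b4 + 21 * b1 * b1 * b4 * b5 + 24 * b1 * b1 * b3 + 15 * b1 * b1 * b3 * b5 + 15 * b1 * b1 * b3 * b4 + 15 * b1 * b1 * b3 * b4 * b5 + 27 * b1 * b1 * b2 + 15 * b1 * b1 * b2 * b5 + 15 * b1 * b1 * b2 * b4 + 9 * b1 * b1 * b2 * b4 * b5 + 15 * b1 * b1 * b2 * b3 + 9 * b1 * b1 * b2 * b3 * b5 + 9 * b1 * b1 * b2 * b3 * b4 + 9 * b1 * b1 * b2 * b3 * b4 * b5 + 569 * b0 + 382 * b0 * b5 + 30 * b0 * b5 * b5 + 382 * b0 * b4 + 289 * b0 * b4 * b5 + 21 * b0 * b4 * b5 * b5 + 30 * b0 * b4 * b4 + 21 * b0 * b4 * b4 * b5 + 317 * b0 * b3 + 218 * b0 * b3 * b5 + 15 * b0 * b3 * b5 * b5 + 218 * b0 * b3 * b4 + 215 * b0 * b3 * b4 * b5 + 15 * b0 * b3 * b4 * b5 * b5 + 15 * b0 * b3 * b4 * b4 + 15 * b0 * b3 * b4 * b4 * b5 + 24 * b0 * b3 * b3 + 15 * b0 * b3 * b3 * b5 + 15 * b0 * b3 * b3 * b4 + 15 * b0 *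 b3 * b3 * b4 * b5 + 342 * b0 * b2 + 218 * b0 * b2 * b5 + 15 * b0 * b2 * b5 * b5 + 218 * b0 * b2 * b4 + 147 * b0 * b2 * b4 * b5 + 9 * b0 * b2 * b4 * b5 * b5 + 15 * b0 * b2 * b4 * b4 + 9 * b0 * b2 * b4 * b4 * b5 + 212 * b0 * b2 * b3 + 141 * b0 * b2 * b3 * b5 + 9 * b0 * b2 * b3 * b5 * b5 + 141 * b0 * b2 * b3 * b4 + 138 * b0 * b2 * b3 * b4 * b5 + 9 * b0 * b2 * b3 * b4 * b5 * b5 + 9 * b0 * b2 * b3 * b4 * b4 + 9 * b0 * b2 * b3 * b4 * b4 * b5 + 15 * b0 * b2 * b3 * b3 + 9 * b0 * b2 * b3 * b3 * b5 + 9 * b0 * b2 * b3 * b3 * b4 + 9 * b0 * b2 * b3 * b3 * b4 * b5 + 27 * b0 * b2 * b2 + 15 * b0 * b2 * b2 * b5 + 15 * b0 * b2 * b2 * b4 + 9 * b0 * b2 * b2 * b4 * b5 + 15 * b0 * b2 * b2 * b3 + 9 * b0 * b2 * b2 * b3 * b5 + 9 * b0 * b2 * b2 * b3 * b4 + 9 * b0 * b2 * b2 * b3 * b4 * b5 + 438 * b0 * b1 + 289 * b0 * b1 * b5 + 21 * b0 * b1 * b5 * b5 + 289 * b0 * b1 * b4 + 221 * b0 * b1 * b4 * b5 + 15 * b0 * b1 * b4 * b5 * b5 + 21 * b0 * b1 * b4 * b4 + 15 * b0 * b1 * b4 * b4 * b5 + 221 * b0 * b1 * b3 + 147 * b0 *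 b1 * b3 * b5 + 9 * b0 * b1 * b3 * b5 * b5 + 147 * b0 * b1 * b3 * b4 + 144 * b0 * b1 * b3 * b4 * b5 + 9 * b0 * b1 * b3 * b4 * b5 * b5 + 9 * b0 * b1 * b3 * b4 * b4 + 9 * b0 * b1 * b3 * b4 * b4 * b5 + 15 * b0 * b1 * b3 * b3 + 9 * b0 * b1 * b3 * b3 * b5 + 9 * b0 * b1 * b3 * b3 * b4 + 9 * b0 * b1 * b3 * b3 * b4 * b5 + 339 * b0 * b1 * b2 + 215 * b0 * b1 * b2 * b5 + 15 * b0 * b1 * b2 * b5 * b5 + 215 * b0 * b1 * b2 * b4 + 144 * b0 * b1 * b2 * b4 * b5 + 9 * b0 * b1 * b2 * b4 * b5 * b5 + 15 * b0 * b1 * b2 * b4 * b4 + 9 * b0 * b1 * b2 * b4 * b4 * b5 + 209 * b0 * b1 * b2 * b3 + 138 * b0 * b1 * b2 * b3 * b5 + 9 * b0 * b1 * b2 * b3 * b5 * b5 + 138 * b0 * b1 * b2 * b3 * b4 + 135 * b0 * b1 * b2 * b3 * b4 * b5 + 9 * b0 * b1 * b2 * b3 * b4 * b5 * b5 + 9 * b0 * b1 * b2 * b3 * b4 * b4 + 9 * b0 * b1 * b2 * b3 * b4 * b4 * b5 + 15 * b0 * b1 * b2 * b3 * b3 + 9 * b0 * b1 * b2 * b3 * b3 * b5 + 9 * b0 * b1 * b2 * b3 * b3 * b4 + 9 * b0 * b1 * b2 * b3 * b3 * b4 * b5 + 27 * b0 * b1 * b2 * b2 + 15 * b0 * b1 *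 b2 * b2 * b5 + 15 * b0 * b1 * b2 * b2 * b4 + 9 * b0 * b1 * b2 * b2 * b4 * b5 + 15 * b0 * b1 * b2 * b2 * b3 + 9 * b0 * b1 * b2 * b2 * b3 * b5 + 9 * b0 * b1 * b2 * b2 * b3 * b4 + 9 * b0 * b1 * b2 * b2 * b3 * b4 * b5 + 36 * b0 * b1 * b1 + 21 * b0 * b1 * b1 * b5 + 21 * b0 * b1 * b1 * b4 + 15 * b0 * b1 * b1 * b4 * b5 + 15 * b0 * b1 * b1 * b3 + 9 * b0 * b1 * b1 * b3 * b5 + 9 * b0 * b1 * b1 * b3 * b4 + 9 * b0 * b1 * b1 * b3 * b4 * b5 + 27 * b0 * b1 * b1 * b2 + 15 * b0 * b1 * b1 * b2 * b5 + 15 * b0 * b1 * b1 * b2 * b4 + 9 * b0 * b1 * b1 * b2 * b4 * b5 + 15 * b0 * b1 * b1 * b2 * b3 + 9 * b0 * b1 * b1 * b2 * b3 * b5 + 9 * b0 * b1 * b1 * b2 * b3 * b4 + 9 * b0 * b1 * b1 * b2 * b3 * b4 * b5 + 51 * b0 * b0 + 30 * b0 * b0 * b5 + 30 * b0 * b0 * b4 + 21 * b0 * b0 * b4 * b5 + 24 * b0 * b0 * b3 + 15 * b0 * b0 * b3 * b5 + 15 * b0 * b0 * b3 * b4 + 15 * b0 * b0 * b3 * b4 * b5 + 27 * b0 * b0 * b2 + 15 * b0 * b0 * b2 * b5 + 15 * b0 * b0 * b2 * b4 + 9 * b0 * b0 * b2 * b4 * b5 + 15 * b0 * b0 * b2 *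 b3 + 9 * b0 * b0 * b2 * b3 * b5 + 9 * b0 * b0 * b2 * b3 * b4 + 9 * b0 * b0 * b2 * b3 * b4 * b5 + 36 * b0 * b0 * b1 + 21 * b0 * b0 * b1 * b5 + 21 * b0 * b0 * b1 * b4 + 15 * b0 * b0 * b1 * b4 * b5 + 15 * b0 * b0 * b1 * b3 + 9 * b0 * b0 * b1 * b3 * b5 + 9 * b0 * b0 * b1 * b3 * b4 + 9 * b0 * b0 * b1 * b3 * b4 * b5 + 27 * b0 * b0 * b1 * b2 + 15 * b0 * b0 * b1 * b2 * b5 + 15 * b0 * b0 * b1 * b2 * b4 + 9 * b0 * b0 * b1 * b2 * b4 * b5 + 15 * b0 * b0 * b1 * b2 * b3 + 9 * b0 * b0 * b1 * b2 * b3 * b5 + 9 * b0 * b0 * b1 * b2 * b3 * b4 + 9 * b0 * b0 * b1 * b2 * b3 * b4 * b5)); ring ].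

Qed.


Lemma link (f : nat -> nat) (hf : forall k, 6 <= k -> f k = 0) :
  a6 (f 0) (f 1) (f 2) (f 3) (f 4) (f 5) = f.
Proof.
apply: functional_extensionality => k; rewrite /a6.
do 6 (case: k => [|k] //); by rewrite /= nth_nil hf.
Qed.

Lemma DF_link (f : nat -> nat) :
  \sum_(p : B7 | validb (fun k => f k == 0) p)
     \prod_(v : 'I_6) (if covb p v || (f v == 0) then 1 else f v) = DF f.
Proof.
rewrite /DF big_mkcond; apply: eq_bigr => p _; case: ifP => // _.
by rewrite -wD_big.
Qed.

Lemma NF_link (f : nat -> nat) :
  \sum_(p : B7 | validb (fun k => f k == 0) p)
    (#|[set j : 'I_7 | hasb p j]| + #|[set v : 'I_6 | ~~ (covb p v || (f v == 0))]|) *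
     \prod_(v : 'I_6) (if covb p v || (f v == 0) then 1 else f v) = NF f.
Proof.
rewrite /NF big_mkcond; apply: eq_bigr => p _; case: ifP => // _.
by rewrite -wD_big wS_big.
Qed.

Lemma a_ge6 n' (att0 : 'I_n'.+1 -> 'I_6) k : 6 <= k -> a att0 k = 0.
Proof.
move=> k6; rewrite /a; apply/eqP; rewrite cards_eq0; apply/eqP/setP => x; rewrite !inE.
apply/negbTE; apply/negP => /andP[_ /eqP e]; have := ltn_ord (att0 x).
by rewrite e ltnNge k6.
Qed.

Lemma gen n' (hn6 : 6 <= n') (att0 : 'I_n'.+1 -> 'I_6) :
  #|[set M | maximal_matching (Gedge att0) M]| =
     DF (a6 (a att0 0) (a att0 1) (a att0 2) (a att0 3) (a att0 4) (a att0 5)) /\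
  \sum_(M | maximal_matching (Gedge att0) M) #|M| =
     NF (a6 (a att0 0) (a att0 1) (a att0 2) (a att0 3) (a att0 4) (a att0 5)).
Proof.
rewrite (countD hn6) (countN hn6) (link (f := a att0)); last exact: a_ge6.
by rewrite /za DF_link NF_link.
Qed.

Lemma sumA n' (att0 : 'I_n'.+1 -> 'I_6) :
  a att0 0 + a att0 1 + a att0 2 + a att0 3 + a att0 4 + a att0 5 =
  #|[set x : 'I_n'.+1 | 6 <= x]|.
Proof.
rewrite -sum1_card (partition_big (fun x => att0 x) xpredT) //=.
have inner : forall j : 'I_6,
    \sum_(i | (i \in [set x : 'I_n'.+1 | 6 <= x]) && (att0 i == j)) 1 = a att0 j.
  by move=> j; rewrite /a -sum1_card; apply: eq_bigl => i; rewrite !inE.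
rewrite (eq_bigr _ (fun j _ => inner j)).
by rewrite !big_ord_recr big_ord0 /= add0n.
Qed.

Lemma aT n' k : a (fun _ : 'I_n'.+1 => v3) k = if k == 2 then #|[set x : 'I_n'.+1 | 6 <= x]| else 0.
Proof.
rewrite /a; case E: (k == 2).
  move/eqP: E => ->.
  by apply: eq_card => x; rewrite !inE andbT.
apply/eqP; rewrite cards_eq0; apply/eqP/setP => x; rewrite !inE.
have -> : (nat_of_ord v3 == k) = false by apply/eqP => e; rewrite -e in E.
by rewrite andbF.
Qed.

Theorem lemma4p3 (n : nat) (hn : (7 <= n)%N) (att : 'I_n -> 'I_6)
  (hv3 : exists i : 'I_n, (6 <= i)%N /\ att i = v3)
  (hw1 : exists j : 'I_n, (6 <= j)%N /\ att j = w1) :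
  (avm (Tn1_33 n) < avm (Gedge att))%R.
Proof.
case: n hn att hv3 hw1 => [|n'] // hn att hv3 hw1.
have hn6 : 6 <= n' by exact: hn.
have eT : Tn1_33 n'.+1 = Gedge (fun _ : 'I_n'.+1 => v3) by [].
rewrite /avm eT.
have [DG NG] := gen hn6 att.
have [DT NT] := gen hn6 (fun _ : 'I_n'.+1 => v3).
have hx2 : 0 < a att 2.
  case: hv3 => i [i6 ai]; have := a_gt0 att i6; rewrite ai /za => /negbT.
  by rewrite lt0n.
have hx3 : 0 < a att 3.
  case: hw1 => i [i6 ai]; have := a_gt0 att i6; rewrite ai /za => /negbT.
  by rewrite lt0n.
have key := @final (a att 0) (a att 1) (a att 2) (a att 3) (a att 4) (a att 5) hx2 hx3.
rewrite sumA in key.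
rewrite !aT /= in DT NT.
rewrite -DT -NT -DG -NG in key.
set DGc := #|[set M | maximal_matching (Gedge att) M]| in key *.
set DTc := #|[set M | maximal_matching (Gedge (fun _ : 'I_n'.+1 => v3)) M]| in key *.
set NGc := \sum_(M | maximal_matching (Gedge att) M) #|M| in key *.
set NTc := \sum_(M | maximal_matching (Gedge (fun _ : 'I_n'.+1 => v3)) M) #|M| in key *.
have DTp : 0 < DTc by case: (posnP DTc) key => // ->; rewrite muln0.
have DGp : 0 < DGc.
  case: (posnP DGc) key => // e.
  have -> : NGc = 0.
    rewrite /NGc big_pred0 // => M; apply/negP => hM.
    move: e; rewrite /DGc => /eqP; rewrite cards_eq0 => /eqP/setP/(_ M).
    by rewrite !inE hM.
  by rewrite e muln0.
rewrite ltr_pdivrMr ?ltr0n // mulrAC ltr_pdivlMr ?ltr0n //.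
by rewrite -!natrM ltr_nat.
Qed.
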